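(* Let $p$ be a prime and $k$ a positive integer. Then $$\Psi_{p^k}(x)\equiv (x^2+4)^{\varphi(p^k)/2}\pmod p,$$ i.e., the congruence holds coefficientwise in $\mathbb{Z}[x]$ (for $p=2$ and $k=1$ this is to be read as $\Psi_2(x)=x$, the square root of $x^2+4\equiv x^2 \pmod 2$).
   Context: The Fibonacci polynomials are defined by $F_1(x)=1$, $F_2(x)=x$, and $F_n(x)=xF_{n-1}(x)+F_{n-2}(x)$ for $n\geq 3$. For $n\geq 2$, the $n$-th fibotomic polynomial $\Psi_n(x)\in\mathbb{Z}[x]$ is the product of the monic irreducible factors of $F_n(x)$ which are not factors of $F_k(x)$ for any $k<n$; also $\Psi_1(x)=1$. $\varphi$ is Euler's totient function. *)

(* Defs.v *)
From HB Require Import structures.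
From mathcomp Require Import all_boot all_order all_algebra.
Set Implicit Arguments. Unset Strict Implicit. Unset Printing Implicit Defensive.
Import Order.TTheory GRing.Theory Num.Theory.
Local Open Scope ring_scope.

Fixpoint fibp (n : nat) : {poly int} :=
  match n with
  | 0%N => 0
  | 1%N => 1
  | (m.+1 as n').+1 => 'X * fibp n' + fibp m
  end.

Definition is_fibotomic (n : nat) (q : {poly int}) : Prop :=
  exists s : seq {poly int},
    [/\ uniq s,
        all (fun r => r \is monic) s,
        (forall r, r \in s -> irreducible_poly r),
        (forall r : {poly int}, r \is monic -> irreducible_poly r ->
           (r \in s <-> (r %| fibp n /\ forall k, (1 <= k < n)%N -> ~~ (r %| fibp k))))
      & q = \prod_(r <- s) r].

Definition poly_congr (m : nat) (a b : {poly int}) : Prop :=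
  forall i : nat, (a`_i == b`_i %[mod m%:Z])%Z.

(* Main.v *)
Require Import Defs.
From HB Require Import structures.
From mathcomp Require Import all_boot all_order all_algebra.
From mathcomp Require Import ring lra zify.
From Stdlib Require Import Classical.
Set Implicit Arguments. Unset Strict Implicit.
Import Order.TTheory GRing.Theory Num.Theory.
Local Open Scope ring_scope.


Section Map.
Variable R : comNzRingType.
Variable f : {rmorphism int -> R}.
Definition F (n : nat) : {poly R} := map_poly f (fibp n).

Lemma F0 : F 0 = 0. Proof. by rewrite /F /= rmorph0. Qed.
Lemma F1 : F 1 = 1. Proof. by rewrite /F /= rmorph1. Qed.
Lemma FSS n : F n.+2 = 'X * F n.+1 + F n.
Proof. by rewrite /F /= rmorphD rmorphM /= map_polyX. Qed.
Lemma F2 : F 2 = 'X. Proof. by rewrite FSS F1 F0 mulr1 addr0. Qed.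

Lemma F_add a b : F (a + b).+1 = F a.+1 * F b.+1 + F a * F b.
Proof.
suff: F (a + b).+1 = F a.+1 * F b.+1 + F a * F b /\
      F (a.+1 + b).+1 = F a.+2 * F b.+1 + F a.+1 * F b by case.
elim: a => [|a [IH1 IH2]].
  rewrite add0n F0 F1 !mul1r mul0r addr0; split=> //; rewrite FSS F1 F0 FSS; ring.
split; first exact: IH2.
rewrite !addSn in IH2 |- *; rewrite FSS IH2 IH1 !FSS; ring.
Qed.

Lemma cassini n : F n.+1 ^+ 2 - 'X * F n * F n.+1 - F n ^+ 2 = (-1) ^+ n.
Proof.
elim: n => [|n IH]; first by rewrite F1 F0; ring.
rewrite FSS [in RHS]exprS -IH; ring.
Qed.

Lemma F_mul d j : exists g, F (d * j) = F d * g.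
Proof.
case: d => [|d]; first by exists 0; rewrite mul0n F0 mul0r.
elim: j => [|j [g Hg]]; first by exists 0; rewrite muln0 F0 mulr0.
exists (F (d.+1 * j).+1 + g * F d).
by rewrite mulnS addSn F_add Hg; ring.
Qed.

Lemma F_double n : F (n.+1 + n.+1) = F n.+1 * ('X * F n.+1 + F n *+ 2).
Proof. rewrite addnS F_add FSS; ring. Qed.

Lemma F_deriv n : ('X ^+ 2 + 4%:P) * (F n)^`() = (F n.+1 *+ 2 - 'X * F n) *+ n - 'X * F n.
Proof.
suff: ('X ^+ 2 + 4%:P) * (F n)^`() = (F n.+1 *+ 2 - 'X * F n) *+ n - 'X * F n /\
 ('X ^+ 2 + 4%:P) * (F n.+1)^`() = (F n.+2 *+ 2 - 'X * F n.+1) *+ n.+1 - 'X * F n.+1 by case.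
elim: n => [|n [IH1 IH2]].
  rewrite F0 F1 FSS F1 F0 !derivE. split; ring.
split; first exact: IH2.
have E : ('X ^+ 2 + 4%:P) * (F n.+2)^`() = ('X ^+ 2 + 4%:P) * F n.+1 +
   'X * (('X ^+ 2 + 4%:P) * (F n.+1)^`()) + ('X ^+ 2 + 4%:P) * (F n)^`().
  rewrite FSS derivD derivM derivX; ring.
rewrite E IH1 IH2 !FSS; ring.
Qed.
End Map.


Definition toQ := map_poly (intr : int -> rat).
Definition FQ n : {poly rat} := @F rat (intr : {rmorphism int -> rat}) n.

Section B.
Variable R : {poly rat}.
Hypothesis Rirr : irreducible_poly R.

Lemma Rprime a b : R %| a * b -> R %| a \/ R %| b.
Proof.
have [Ha|Ha] := boolP (R %| a); first by left.
rewrite -(irreducible_poly_coprime _ Rirr) in Ha.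
by rewrite (Gauss_dvdpr _ Ha) => ->; right.
Qed.

Lemma nocons n : R %| FQ n -> R %| FQ n.+1 -> False.
Proof.
move=> H1 H2.
have H : R %| (-1) ^+ n.
  rewrite -((@cassini rat (intr : {rmorphism int -> rat}))) -/(FQ n) -/(FQ n.+1).
  by rewrite !expr2; apply: dvdp_sub; [apply: dvdp_sub; [apply: dvdp_mulr | apply: dvdp_mull] | apply: dvdp_mulr].
have : R %| 1.
  have -> : (1 : {poly rat}) = (-1) ^+ n * (-1) ^+ n.
    by rewrite -exprMn mulrNN mulr1 expr1n.
  exact: dvdp_mulr.
rewrite dvdp1; case: Rirr => /[swap] _; case: (size R) => [|[|]] //.
Qed.

Lemma Rsub x b : R %| FQ (x + b) -> R %| FQ b -> R %| FQ x.
Proof.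
case: b => [|b]; first by rewrite addn0.
rewrite addnS /FQ (F_add _ x b) => H1 H2.
rewrite dvdp_addr in H1; last exact: dvdp_mull.
by case: (Rprime H1) => // Hb; case: (nocons Hb H2).
Qed.

Lemma Rsubm a r c : R %| FQ (r + a * c) -> R %| FQ a -> R %| FQ r.
Proof.
elim: c => [|c IH]; first by rewrite muln0 addn0.
move=> H Ha; apply: (IH _ Ha); apply: (@Rsub _ a); last exact: Ha.
by rewrite -addnA (addnC (a * c)) -mulnS.
Qed.

Lemma Rgcd a b : R %| FQ a -> R %| FQ b -> R %| FQ (gcdn a b).
Proof.
elim: a {-2}a (leqnn a) b => [|N IH] a Ha b HA HB.
  by move: Ha; rewrite leqn0 => /eqP ->; rewrite gcd0n.
rewrite gcdnE; case: eqP => [_|/eqP a0]; first by [].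
apply: IH => //.
  by rewrite -ltnS (leq_trans (ltn_pmod _ _) Ha) ?lt0n.
apply: (@Rsubm a _ (b %/ a)); last exact: HA.
by rewrite addnC mulnC -divn_eq.
Qed.

Lemma Rsqfree n : (0 < n)%N -> R * R %| FQ n -> False.
Proof.
move=> n0 /dvdpP [h Hh].
have H1 : R %| FQ n by rewrite Hh mulrA dvdp_mull.
have H2 : R %| (FQ n)^`().
  rewrite Hh !derivM; apply: dvdp_add; [apply: dvdp_mull; apply: dvdp_mulr; exact: dvdpp | apply: dvdp_mull; apply: dvdp_add; [apply: dvdp_mull | apply: dvdp_mulr]; exact: dvdpp].
have H3 : R %| ('X ^+ 2 + 4%:P) * (FQ n)^`() by apply: dvdp_mull.
rewrite /FQ F_deriv -/(FQ n) -/(FQ n.+1) in H3.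
rewrite dvdp_subl in H3; last by apply: dvdp_mull.
rewrite -scaler_nat dvdpZr in H3; last by rewrite pnatr_eq0 -lt0n.
rewrite dvdp_subl in H3; last by apply: dvdp_mull.
rewrite -scaler_nat dvdpZr // in H3.
exact: nocons H1 H3.
Qed.
End B.


Lemma factor (G : {poly int}) : G \is monic -> exists f : seq {poly int},
  [/\ all (fun r => r \is monic) f, (forall r, r \in f -> irreducible_poly r)
    & G = \prod_(r <- f) r].
Proof.
elim: {G}(size G) {-2}G (leqnn (size G)) => [|N IH] G HN Gm.
  by move: HN; rewrite leqn0 size_poly_eq0 (negPf (monic_neq0 Gm)).
have G0 : G != 0 by exact: monic_neq0.
have [HG1|HG1] := leqP (size G) 1.
  exists [::]; split => //; rewrite big_nil.
  have /size_poly1P [c c0 Gc] : size G == 1%N.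
    by rewrite eqn_leq HG1 lt0n size_poly_eq0.
  by move: Gm; rewrite Gc monicE lead_coefC => /eqP ->.
have [Girr|Girr] := classic (irreducible_poly G).
  exists [:: G]; split; first by rewrite /= Gm.
    by move=> r; rewrite inE => /eqP ->.
  by rewrite big_seq1.
have : ~ irreducible_poly (toQ G) by move/irreducible_rat_int.
rewrite /irreducible_poly size_rat_int_poly => H.
have : ~ (forall q : {poly rat}, size q != 1%N -> q %| toQ G -> q %= toQ G).
  by move=> H'; apply: H; exact: (HG1, H').
move=> /not_all_ex_not [q Hq1].
have [q1 Hq2] := imply_to_and _ _ Hq1.
have [qG qnG] := imply_to_and _ _ Hq2.
have [p1 [a a0 Hq] [r Hr]] := dvdpP_rat_int qG.
have p10 : p1 != 0 by apply: contra_neq G0; rewrite Hr => ->; rewrite mul0r.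
have r0 : r != 0 by apply: contra_neq G0; rewrite Hr => ->; rewrite mulr0.
have sp1 : size p1 = size q by rewrite Hq size_scale // size_rat_int_poly.
have Hs := size_mul p10 r0; rewrite -Hr in Hs.
have sr : (1 < size r)%N.
  rewrite ltnNge; apply/negP => sr1.
  have /size_poly1P [c c0 rc] : size r == 1%N.
    by rewrite eqn_leq sr1 lt0n size_poly_eq0.
  apply: qnG; rewrite Hq Hr rc /toQ rmorphM /= map_polyC /= mulrC mul_polyC.
  apply: eqp_trans (eqp_scale _ a0) _; rewrite eqp_sym; apply: eqp_scale.
  by rewrite intr_eq0.
have sp : (1 < size p1)%N.
  by rewrite ltn_neqAle eq_sym sp1 q1 /= lt0n -sp1 size_poly_eq0.
have lG : lead_coef p1 * lead_coef r = 1.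
  by rewrite -lead_coefM -Hr; apply/monicP.
have lp0 : lead_coef p1 != 0 by rewrite lead_coef_eq0.
have lr0 : lead_coef r != 0 by rewrite lead_coef_eq0.
have [f1 [m1 i1 e1]] : exists f, [/\ all (fun r => r \is monic) f,
   (forall r, r \in f -> irreducible_poly r) & lead_coef r *: p1 = \prod_(r <- f) r].
  apply: IH; last by apply/monicP; rewrite lead_coefZ mulrC.
  rewrite size_scale //; rewrite -ltnS; apply: leq_trans HN; rewrite Hs.
  by move: sr; case: (size r) => [|[|k]] //= _; lia.
have [f2 [m2 i2 e2]] : exists f, [/\ all (fun r => r \is monic) f,
   (forall r, r \in f -> irreducible_poly r) & lead_coef p1 *: r = \prod_(r <- f) r].
  apply: IH; last by apply/monicP; rewrite lead_coefZ.
  rewrite size_scale //; rewrite -ltnS; apply: leq_trans HN; rewrite Hs.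
  by move: sp; case: (size p1) => [|[|k]] //= _; lia.
exists (f1 ++ f2); split.
- by rewrite all_cat m1 m2.
- by move=> x; rewrite mem_cat => /orP [/i1|/i2].
rewrite big_cat /= -e1 -e2 -scalerAl -scalerAr scalerA mulrC lG scale1r.
exact: Hr.
Qed.


Lemma Fid n : @F int (idfun : {rmorphism int -> int}) n = fibp n.
Proof. by rewrite /F map_poly_id. Qed.

Lemma FQE n : FQ n = toQ (fibp n). Proof. by []. Qed.

Lemma fib_monic n : fibp n.+1 \is monic /\ size (fibp n.+1) = n.+1.
Proof.
suff : (fibp n.+1 \is monic /\ size (fibp n.+1) = n.+1) /\
       (fibp n.+2 \is monic /\ size (fibp n.+2) = n.+2) by case.
elim: n => [|n [[IH0 IH0s] [IH1 IH2]]].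
  split; split => /=; rewrite ?monic1 ?size_poly1 ?mulr1 ?addr0 ?monicX ?size_polyX //.
split; first by split.
have H : fibp n.+3 = fibp n.+2 * 'X + fibp n.+1 by rewrite /= mulrC.
have X0 : fibp n.+2 != 0 by apply: monic_neq0.
have Hs : size (fibp n.+2 * 'X) = n.+3 by rewrite size_mulX // IH2.
have Hlt : (size (fibp n.+1) < size (fibp n.+2 * 'X)%R)%N by rewrite Hs IH0s.
rewrite H; split.
  by rewrite monicE lead_coefDl // lead_coefMX -monicE.
by rewrite size_polyDl.
Qed.

Lemma dvd_prod (f : seq {poly int}) r : r \in f -> r %| \prod_(x <- f) x.
Proof. by move=> rf; rewrite (big_rem _ rf) /= dvdp_mulIl. Qed.

Lemma nuniq_sq (f : seq {poly int}) : ~~ uniq f ->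
  exists2 r, r \in f & r * r %| \prod_(x <- f) x.
Proof.
elim: f => [|a f IH] //=; rewrite negb_and negbK => /orP [af|/IH [r rf Hr]].
  exists a; first by rewrite inE eqxx.
  by rewrite big_cons; apply: dvdp_mul; [exact: dvdpp | exact: dvd_prod].
by exists r; rewrite ?inE ?rf ?orbT // big_cons dvdp_mull.
Qed.

Lemma prime_prod (R : {poly rat}) (f : seq {poly int}) : irreducible_poly R ->
  R %| toQ (\prod_(x <- f) x) -> exists2 x, x \in f & R %| toQ x.
Proof.
move=> Ri; elim: f => [|a f IH].
  rewrite big_nil /toQ rmorph1 dvdp1 => /eqP R1.
  by case: Ri; rewrite R1.
rewrite big_cons /toQ rmorphM => /(Rprime Ri) [Ha|Hf].
  by exists a; rewrite ?inE ?eqxx.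
by have [x xf Hx] := IH Hf; exists x; rewrite // inE xf orbT.
Qed.

Lemma gcd_pk (p k j : nat) : prime p -> (0 < k)%N -> (0 < j < p ^ k)%N ->
  (gcdn j (p ^ k) %| p ^ k.-1)%N.
Proof.
move=> pp k0 /andP [j0 jn].
have /(dvdn_pfactor _ _ pp) [i ik gi] := dvdn_gcdr j (p ^ k).
have gj : (gcdn j (p ^ k) <= j)%N by apply: dvdn_leq => //; exact: dvdn_gcdl.
rewrite gi dvdn_exp2l //.
have : i != k by apply: contraTneq gj => ik'; rewrite gi ik' -ltnNge.
lia.
Qed.

Lemma Fdvd d m : (d %| m)%N -> fibp d %| fibp m.
Proof.
move=> /dvdnP [c ->]; have [g Hg] := F_mul (idfun : {rmorphism int -> int}) d c.
by rewrite mulnC -!Fid Hg dvdp_mulIl.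
Qed.

Lemma spec_f (p k : nat) (G : {poly int}) (f : seq {poly int}) :
  prime p -> (0 < k)%N -> fibp (p ^ k) = fibp (p ^ k.-1) * G ->
  all (fun r => r \is monic) f ->
  (forall r, r \in f -> irreducible_poly r) -> G = \prod_(x <- f) x ->
  uniq f /\ forall r : {poly int}, r \is monic -> irreducible_poly r ->
   (r \in f <-> (r %| fibp (p ^ k) /\ forall j, (1 <= j < p ^ k)%N -> ~~ (r %| fibp j))).
Proof.
move=> pp k0 HG fm fi Gf.
set n := (p ^ k)%N; set m := (p ^ k.-1)%N.
have n0 : (0 < n)%N by rewrite expn_gt0 prime_gt0.
have m0 : (0 < m)%N by rewrite expn_gt0 prime_gt0.
have mn : (m < n)%N by rewrite ltn_exp2l ?prime_gt1 //; lia.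
have sq : forall r, irreducible_poly r -> r * r %| fibp n -> False.
  move=> r ri; rewrite -dvdp_rat_int rmorphM /= -/toQ -FQE.
  by apply: Rsqfree => //; apply/irreducible_rat_int.
have rG : forall r, r \in f -> r %| G by move=> r rf; rewrite Gf dvd_prod.
split.
  have [//|/nuniq_sq [r rf Hr]] := boolP (uniq f).
  case: (sq _ (fi r rf)); rewrite HG; apply: dvdp_mull; rewrite Gf; exact: Hr.
move=> r rm ri; split.
  move=> rf; split; first by rewrite HG dvdp_mull ?rG.
  move=> j /andP [j1 jn]; apply/negP => rj.
  have Ri : irreducible_poly (toQ r) by apply/irreducible_rat_int.
  have Hg : toQ r %| FQ (gcdn j n).
    by apply: Rgcd; rewrite // FQE dvdp_rat_int // HG dvdp_mull ?rG.
  have Hm : toQ r %| FQ m.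
    apply: dvdp_trans Hg _; rewrite !FQE dvdp_rat_int; apply: Fdvd.
    by apply: gcd_pk => //; rewrite j1 jn.
  apply: (Rsqfree Ri n0); rewrite FQE HG /toQ rmorphM /=.
  by apply: dvdp_mul => //; rewrite -/toQ dvdp_rat_int rG.
move=> [rn Hj].
have Ri : irreducible_poly (toQ r) by apply/irreducible_rat_int.
move: rn; rewrite -dvdp_rat_int HG /toQ rmorphM /= => /(Rprime Ri) [Hm|].
  by move: (Hj m); rewrite m0 mn -dvdp_rat_int Hm => /(_ isT).
rewrite -/toQ Gf => /(prime_prod Ri) [x xf].
rewrite dvdp_rat_int => rx.
have : r %= x.
  apply: (snd (fi x xf)) rx; case: ri => /= s1 _; lia.
rewrite eqp_monic //; first by move/eqP ->.
exact: (allP fm).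
Qed.


Section Fp.
Variable p : nat.
Hypothesis pp : prime p.
Definition toF := map_poly (intr : int -> 'F_p).
Definition FF n : {poly 'F_p} := @F 'F_p (intr : {rmorphism int -> 'F_p}) n.
Lemma FFE n : FF n = toF (fibp n). Proof. by []. Qed.

Lemma congr_from (G H : {poly int}) : toF G = toF H -> poly_congr p G H.
Proof.
move=> E i; rewrite eqz_mod_dvd (dvdz_pcharf (pchar_Fp pp)) rmorphB /= subr_eq0.
have := congr1 (fun P : {poly 'F_p} => P`_i) E; rewrite /toF !coef_map /= => ->.
by [].
Qed.
End Fp.

Lemma F2pow j : FF 2 (2 ^ j) = 'X ^+ (2 ^ j).-1.
Proof.
elim: j => [|j IH]; first by rewrite expn0 /FF F1 expr0.
have -> : (2 ^ j.+1 = (2 ^ j).-1.+1 + (2 ^ j).-1.+1)%N.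
  have : (0 < 2 ^ j)%N by rewrite expn_gt0.
  rewrite expnS; lia.
rewrite /FF F_double -/(FF 2 _) -/(FF 2 _).
have -> : FF 2 (2 ^ j).-1 *+ 2 = 0.
  by rewrite -mulr_natr -polyC_natr (@pchar_Fp_0 2) ?mulr0.
rewrite addr0 prednK ?expn_gt0 // IH -exprS -exprD.
congr (_ ^+ _).
have : (0 < 2 ^ j)%N by rewrite expn_gt0.
lia.
Qed.


Section Odd.
Variable p : nat.
Hypothesis pp : prime p.
Local Notation K := {poly 'F_p}.
Local Notation RY := {poly K}.
Let w : K := 'X ^+ 2 + 4%:P.
Let c : RY := ('X : K)%:P.
Let u : RY := c + 'X.
Let D : RY := 'X ^+ 2 - w%:P.

Lemma u2 : u ^+ 2 = D + (2%:R * 'X)%:P * u + 4%:R.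
Proof.
rewrite /u /D /c /w; ring.
Qed.

Lemma upow n : exists Q : RY, u ^+ n.+1 =
  Q * D + ((2 ^ n)%:R * FF p n.+1)%:P * u + ((2 ^ n.+1)%:R * FF p n)%:P.
Proof.
elim: n => [|n [Q HQ]].
  exists 0; rewrite /FF F1 F0 !mulr0 mul0r mulr1 !add0r addr0 expr1.
  by rewrite polyC1 mul1r.
exists (u * Q + ((2 ^ n)%:R * FF p n.+1)%:P).
rewrite exprS HQ /FF FSS -/(FF p n.+1) -/(FF p n).
have E : u * (((2 ^ n)%:R * FF p n.+1)%:P * u) =
   ((2 ^ n)%:R * FF p n.+1)%:P * u ^+ 2 by ring.
rewrite mulrDr mulrDr E u2 !expnS !natrM !rmorphM !rmorphD !rmorphM /=.
rewrite !polyC_natr. 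
ring.
Qed.

Lemma Ypow j : exists Q : RY, 'X ^+ (j.*2).+1 = Q * D + (w ^+ j)%:P * 'X.
Proof.
elim: j => [|j [Q HQ]]; first by exists 0; rewrite mul0r add0r expr0 polyC1 mul1r.
exists (Q * D + (w ^+ j)%:P * 'X + Q * w%:P).
have -> : 'X ^+ (j.+1).*2.+1 = 'X ^+ 2 * 'X ^+ (j.*2).+1 :> RY.
  by rewrite -exprD doubleS.
rewrite HQ /D [w ^+ j.+1]exprS rmorphM /=.
move: (w%:P) ((w ^+ j)%:P) => a b; ring.
Qed.

Lemma pcharRY : p \in [pchar RY].
Proof. by rewrite !pchar_poly pchar_Fp. Qed.

Lemma frob (R : comNzRingType) (x y : R) j : p \in [pchar R] ->
  (x + y) ^+ (p ^ j) = x ^+ (p ^ j) + y ^+ (p ^ j).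
Proof.
move=> pc; apply: exprDn_pchar.
by rewrite pnatX (pnatE _ pp) pc.
Qed.

Lemma two_pow j : odd p -> ((2 ^ (p ^ j).-1)%:R : 'F_p) = 1.
Proof.
move=> po.
have H : (2%:R : 'F_p) ^+ (p ^ j) = 2%:R.
  by rewrite -(addn1 1) natrD frob ?pchar_Fp // expr1n.
have t0 : (2%:R : 'F_p) != 0.
  rewrite -(dvdn_pcharf (pchar_Fp pp)); apply/negP => H2.
  have := dvdn_leq (isT : (0 < 2)%N) H2.
  by move: (odd_prime_gt2 po pp); lia.
apply: (mulfI t0); rewrite mulr1 natrX -exprS prednK ?expn_gt0 ?prime_gt0 //.
Qed.

Lemma FFodd j : odd p -> FF p (p ^ j) = w ^+ (p ^ j)./2.
Proof.
move=> po.
set q := (p ^ j)%N.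
have q0 : (0 < q)%N by rewrite expn_gt0 prime_gt0.
have qo : odd q by rewrite oddX po orbT.
have qE : q = ((q./2).*2).+1.
  by rewrite -[in LHS](odd_double_half q) qo.
have [Q HQ] := upow q.-1.
have [Q' HQ'] := Ypow q./2.
rewrite prednK // in HQ.
have HF := frob c 'X j pcharRY.
have HX : ('X : RY) ^+ q = Q' * D + (w ^+ q./2)%:P * 'X.
  by rewrite {1}qE.
rewrite -/u -/q HQ HX in HF.
set a := (2 ^ q.-1)%:R * FF p q in HF.
set b := (2 ^ q)%:R * FF p q.-1 in HF.
have aE : a = (2 ^ q.-1)%:R * FF p q by [].
clearbody a b.
have E : (Q - Q') * D = (w ^+ q./2 - a)%:P * 'X + ('X ^+ q - a * 'X - b)%:P.
  rewrite !rmorphB !rmorphM /= !rmorphXn /= -/c.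
  have HF' : Q * D = c ^+ q + (Q' * D + (w ^+ q./2)%:P * 'X) - a%:P * u - b%:P.
    rewrite -HF; ring.
  rewrite mulrBl HF' /u rmorphXn /=; ring.
have E0 : (w ^+ q./2 - a)%:P * 'X + ('X ^+ q - a * 'X - b)%:P = 0.
  rewrite -E; have [->|QQ] := eqVneq (Q - Q') 0; first by rewrite mul0r.
  have D0 : D != 0 by rewrite -size_poly_gt0 /D size_XnsubC.
  have := size_MXaddC ((w ^+ q./2 - a)%:P) ('X ^+ q - a * 'X - b).
  rewrite -E size_mul // /D size_XnsubC // size_polyC.
  have : (0 < size (Q - Q')%R)%N by rewrite size_poly_gt0.
  move: (size (Q - Q')%R) => s s0.
  by case: ifP => _; case: (w ^+ q./2 - a != 0) => H; exfalso; lia.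
have := congr1 (fun P : RY => P`_1) E0.
rewrite coefD coefMX coefC /= coefC coef0 /= addr0 => /eqP.
rewrite subr_eq0 => /eqP ->.
by rewrite aE /q -polyC_natr two_pow // polyC1 mul1r.
Qed.
End Odd.


Unset Implicit Arguments.
Theorem mainTheorem11 (p k : nat) (hp : prime p) (hk : (0 < k)%N) :
  (exists q, is_fibotomic (p ^ k) q) /\
  (forall q, is_fibotomic (p ^ k) q ->
     if (p == 2%N) && (k == 1%N) then q = 'X
     else poly_congr p q (('X ^+ 2 + 4%:P) ^+ (totient (p ^ k) %/ 2))).
Proof.
have nE : (p ^ k = p ^ k.-1 * p)%N by rewrite -expnSr prednK.
have [G HG] := F_mul (idfun : {rmorphism int -> int}) (p ^ k.-1) p.
rewrite -nE !Fid in HG.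
have m0 : (0 < p ^ k.-1)%N by rewrite expn_gt0 prime_gt0.
have n0 : (0 < p ^ k)%N by rewrite expn_gt0 prime_gt0.
have Gm : G \is monic.
  have [mm _] := fib_monic (p ^ k.-1).-1.
  have [nm _] := fib_monic (p ^ k).-1.
  rewrite prednK // in mm; rewrite prednK // HG in nm.
  by rewrite monicMl in nm.
have [f [fm fi Gf]] := factor Gm.
have [uf spec] := spec_f hp hk HG fm fi Gf.
have qG : forall q, is_fibotomic (p ^ k) q -> q = G.
  move=> q [s [us ms irs ss ->]].
  rewrite Gf; apply: perm_big; apply: uniq_perm => // x.
  apply/idP/idP => xs.
    apply/(spec x (allP ms x xs) (irs x xs)); exact/(ss x (allP ms x xs) (irs x xs)).
  apply/(ss x (allP fm x xs) (fi x xs)); exact/(spec x (allP fm x xs) (fi x xs)).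
split.
  exists G, f; split => //.
move=> q /qG -> {q qG spec uf f fm fi Gf}.
case: ifP => [/andP [/eqP p2 /eqP k1]|H2].
  by move: HG; rewrite p2 k1 /= mulr1 addr0 mul1r => ->.
apply: (congr_from hp).
have HF : FF p (p ^ k) = FF p (p ^ k.-1) * toF p G.
  by rewrite !FFE HG /toF rmorphM.
have RHS : toF p (('X ^+ 2 + 4%:P) ^+ (totient (p ^ k) %/ 2)) =
    ('X ^+ 2 + 4%:P) ^+ (totient (p ^ k) %/ 2).
  by rewrite /toF rmorphXn rmorphD /= map_polyXn map_polyC.
rewrite RHS; rewrite totient_pfactor //.
have [p2|po] := even_prime hp.
  subst p.
  have k2 : (1 < k)%N by move: H2; rewrite eqxx /=; lia.
  rewrite !F2pow in HF.
  have -> : (4 : 'F_2) = 0 by apply/val_inj.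
  rewrite polyC0 addr0 -exprM.
  have me : (2 * ((2.-1 * 2 ^ k.-1) %/ 2) = 2 ^ k.-1)%N.
    rewrite mul1n; have -> : (2 ^ k.-1 = 2 * 2 ^ k.-2)%N.
      by rewrite -expnS (_ : k.-2.+1 = k.-1) //; lia.
    by rewrite mulKn.
  rewrite me; apply: (@mulfI _ ('X ^+ (2 ^ k.-1).-1)).
    by rewrite expf_neq0 // polyX_eq0.
  rewrite -HF -exprD nE; congr (_ ^+ _); lia.
rewrite !FFodd // in HF.
set m := (p ^ k.-1)%N in HF nE *.
have mo : odd m by rewrite oddX po orbT.
have no : odd (m * p) by rewrite oddM mo po.
have e : ((m * p)./2 = m./2 + (p.-1 * m) %/ 2)%N.
  have h1 : (p.-1 * m = m * p - m)%N by rewrite mulnC -subn1 mulnBr muln1.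
  have h2 : (m <= m * p)%N by rewrite leq_pmulr ?prime_gt0.
  have mo' : (m %% 2 = 1)%N by rewrite modn2 mo.
  have no' : ((m * p) %% 2 = 1)%N by rewrite modn2 no.
  rewrite h1 -!divn2; move: (m * p)%N h2 no' => N h2 no'; lia.
rewrite nE e exprD in HF.
apply: (@mulfI _ (('X ^+ 2 + 4%:P) ^+ m./2)); last by rewrite -HF.
by rewrite expf_neq0 // monic_neq0 // monicXnaddC.
Qed.
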